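(* Let $\mathcal F$ be a finite set of edge-colored graphs (edge colors $[r]$) such that for every color $i\in[r]$ there exists an $\mathcal F$-safe colored $i$-determiner. Then for every $d\in\mathbb N$ and every $i\in[r]$ there exists an $\mathcal F$-safe $d$-remote colored $i$-determiner.
   Context: Graphs are finite simple undirected. An edge-colored graph is $(G,\gamma)$, $\gamma\colon E(G)\to[r]$. $(G,\gamma)$ is $\mathcal F$-free if there is no $(F,\phi)\in\mathcal F$ and graph homomorphism $h\colon F\to G$ with $\gamma(h(e))=\phi(e)$ for all $e\in E(F)$. A partially edge-colored graph is $(G,\xi)$ with $\xi\colon S\to[r]$, $S=\mathrm{dom}(\xi)\subseteq E(G)$; an extension of $\xi$ is $\gamma\colon E(G)\to[r]$ with $\gamma|_S=\xi$. Gluing: for graphs $G,H$ with pairwise disjoint edges $e_1,\dots,e_k\in E(G)$, $f_1,\dots,f_k\in E(H)$, $G\oplus H$ is obtained from the disjoint union by identifying $e_j$ with $f_j$ for each $j$ (identifying endpoints in some way). $(G,\xi)$ with pairwise disjoint edges $e_1,\dots,e_k\notin\mathrm{dom}(\xi)$ is $\mathcal F$-safe along $e_1,\dots,e_k$ if (a) $\xi$ has an $\mathcal F$-free extension, and (b) for every $\mathcal F$-free $(H,\gamma_H)$ and pairwise disjoint $f_1,\dots,f_k\in E(H)$ such that some $\mathcal F$-free extension $\gamma$ of $\xi$ satisfies $\gamma(e_j)=\gamma_H(f_j)$ for all $j$, and every way of forming $G\oplus H$, the partial coloring $\xi\cup\gamma_H$ of $G\oplus H$ has an $\mathcal F$-free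 extension. $\mathrm{dist}(e,e')$ is the minimum shortest-path distance between an endpoint of $e$ and one of $e'$; $\mathrm{dist}(e,S)=\min_{e'\in S}\mathrm{dist}(e,e')$. A colored $i$-determiner is $(G,\xi,e)$ with $e\in E(G)\setminus\mathrm{dom}(\xi)$ such that (1) one endpoint of $e$ is incident to no edge of $\mathrm{dom}(\xi)$, (2) $\xi$ has an $\mathcal F$-free extension, (3) every $\mathcal F$-free extension $\gamma$ of $\xi$ has $\gamma(e)=i$. It is $d$-remote if $\mathrm{dist}(e,\mathrm{dom}(\xi))\ge d$, and $\mathcal F$-safe if $(G,\xi)$ is $\mathcal F$-safe along $e$. *)

(* Defs.v *)
From mathcomp Require Import all_boot.
From Stdlib Require Lists.List.
Set Implicit Arguments.
Unset Strict Implicit.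
Unset Printing Implicit Defensive.

(* Colors [r] = {1,...,r} are represented by 'I_r = {0,...,r-1}. *)

Record graph := Graph {
  gV :> finType;
  gadj : rel gV;
  gsym : symmetric gadj;
  girr : irreflexive gadj }.

(** An edge-colored (finite simple) graph: the coloring is a symmetric
    function on ordered adjacent pairs (values on non-edges are irrelevant). *)
Record cgraph (r : nat) := CGraph {
  cG : graph;
  ccol : cG -> cG -> 'I_r;
  ccolsym : forall x y, gadj x y -> ccol x y = ccol y x }.

Section Defs.
Variable r : nat.

Definition is_coloring (V : finType) (adj : rel V) (col : V -> V -> 'I_r) :=
  forall x y, adj x y -> col x y = col y x.

Definition Ffree (F : seq (cgraph r)) (V : finType) (adj : rel V)
    (col : V -> V -> 'I_r) : Prop :=
  forall Fc : cgraph r, List.In Fc F ->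
  forall h : cG Fc -> V,
    ~ (forall x y : cG Fc, gadj x y ->
         adj (h x) (h y) /\ col (h x) (h y) = ccol x y).

(** Partial coloring: [xi x y = Some c] means the edge xy is in dom(xi)
    with color c; it is symmetric on edges. *)
Definition is_pcoloring (G : graph) (xi : G -> G -> option 'I_r) :=
  forall x y, gadj x y -> xi x y = xi y x.

Definition extends (G : graph) (xi : G -> G -> option 'I_r)
    (gam : G -> G -> 'I_r) :=
  is_coloring (@gadj G) gam /\
  forall x y c, gadj x y -> xi x y = Some c -> gam x y = c.

Definition free_ext (F : seq (cgraph r)) (G : graph)
    (xi : G -> G -> option 'I_r) (gam : G -> G -> 'I_r) :=
  extends xi gam /\ Ffree F (@gadj G) gam.

(** Gluing G and H along the edge (u,v) of G and (a,b) of H, identifying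
    a with u and b with v.  (The other identification is obtained from the
    ordered pair (b,a), and all ordered pairs are quantified over.) *)
Section Glue.
Variables (G H : graph) (u v : G) (a b : H).

Definition gvert : finType := (G + {y : H | (y != a) && (y != b)})%type.

Definition gl_inG (x : G) : gvert := inl x.

Definition gl_inH (y : H) : gvert :=
  match insub y with
  | Some y' => inr y'
  | None => if y == a then inl u else inl v
  end.

Definition gl_adj : rel gvert := fun p q =>
  [exists x : G, exists x' : G,
      [&& gadj x x', gl_inG x == p & gl_inG x' == q]]
  || [exists y : H, exists y' : H,
      [&& gadj y y', gl_inH y == p & gl_inH y' == q]].

End Glue.

(** F-safety of (G, xi) along the edge (u,v) (case k = 1). *)
Definition Fsafe (F : seq (cgraph r)) (G : graph)
    (xi : G -> G -> option 'I_r) (u v : G) : Prop :=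
  (exists gam, free_ext F xi gam) /\
  forall (H : graph) (gH : H -> H -> 'I_r),
    is_coloring (@gadj H) gH -> Ffree F (@gadj H) gH ->
    forall a b : H, gadj a b ->
    (exists gam, free_ext F xi gam /\ gam u v = gH a b) ->
    exists g' : @gvert G H a b -> @gvert G H a b -> 'I_r,
      [/\ is_coloring (@gl_adj G H u v a b) g',
          (forall x x' c, gadj x x' -> xi x x' = Some c ->
              g' (@gl_inG G H a b x) (@gl_inG G H a b x') = c),
          (forall y y', gadj y y' ->
              g' (@gl_inH G H u v a b y) (@gl_inH G H u v a b y') = gH y y') &
          Ffree F (@gl_adj G H u v a b) g'].

Definition determiner (F : seq (cgraph r)) (G : graph)
    (xi : G -> G -> option 'I_r) (u v : G) (i : 'I_r) : Prop :=
  [/\ gadj u v, xi u v = None,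
      (exists2 w, (w == u) || (w == v) &
         forall z, gadj w z -> xi w z = None),
      (exists gam, free_ext F xi gam) &
      (forall gam, free_ext F xi gam -> gam u v = i)].

Fixpoint walk (G : graph) (n : nat) (x y : G) : bool :=
  match n with
  | 0 => x == y
  | n'.+1 => [exists z, gadj x z && walk n' z y]
  end.

(** dist(uv, dom xi) >= d : no endpoint of uv is at shortest-path distance
    < d from an endpoint of an edge of dom(xi). *)
Definition remote (G : graph) (xi : G -> G -> option 'I_r) (u v : G)
    (d : nat) : Prop :=
  forall w z z' n, (w == u) || (w == v) -> gadj z z' -> xi z z' != None ->
    n < d -> ~~ walk n w z.

End Defs.

(* Main.v *)
Require Import Defs.
From mathcomp Require Import all_boot.
Set Implicit Arguments.
Unset Strict Implicit.
Unset Printing Implicit Defensive.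

Section Generic.
Variables (G H : graph) (u v : G) (a b : H).
Local Notation inH := (@gl_inH G H u v a b).
Local Notation adj := (@gl_adj G H u v a b).

Variant inH_spec (y : H) : (G + {z : H | (z != a) && (z != b)})%type -> Type :=
 | InHa of y = a : inH_spec y (inl u)
 | InHb of y = b & y != a : inH_spec y (inl v)
 | InHo (s : {z : H | (z != a) && (z != b)}) of val s = y & y != a & y != b : inH_spec y (inr s).

Lemma inHP y : inH_spec y (inH y).
Proof.
rewrite /gl_inH; case: insubP => [s /andP[ya yb] sy|].
  by apply: InHo.
rewrite negb_and !negbK; case: eqP => [->|ya] /= yb; first by apply: InHa.
by rewrite (eqP yb); apply: InHb => //; rewrite -(eqP yb); apply/eqP.
Qed.

Lemma inH_a : inH a = inl u.
Proof. by case: inHP => // [_|s _]; rewrite eqxx. Qed.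

Lemma inH_b : a != b -> inH b = inl v.
Proof. by move=> ab; case: inHP => // [ba|s _ _]; [move: ab; rewrite ba eqxx|rewrite eqxx]. Qed.

Lemma inH_inl y x : inH y = inl x -> (y = a /\ x = u) \/ (y = b /\ x = v).
Proof. by case: inHP => [->[<-]|-> _ [<-]|//]; [left|right]. Qed.

Lemma inH_inr y s : inH y = inr s -> y = val s.
Proof. by case: inHP => // s' <- _ _ [->]. Qed.

Lemma inH_inj : u != v -> injective inH.
Proof.
move=> uv y1 y2; case: inHP => [->|-> ba|s <- _ _]; case: inHP => [->|-> ba'|s' <- _ _] //.
- by move=> [] /eqP; rewrite (negbTE uv).
- by move=> [] /esym /eqP; rewrite (negbTE uv).
- by move=> [->].
Qed.

Lemma adjP p q : reflect
  ((exists x x', [/\ gadj x x', inl x = p & inl x' = q]) \/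
   (exists y y', [/\ gadj y y', inH y = p & inH y' = q])) (adj p q).
Proof.
apply: (iffP orP) => [[/existsP[x /existsP[x' /and3P[? /eqP ? /eqP ?]]]|
                       /existsP[y /existsP[y' /and3P[? /eqP ? /eqP ?]]]]|
                      [[x [x' [? ? ?]]]|[y [y' [? ? ?]]]]].
- by left; exists x, x'.
- by right; exists y, y'.
- by left; apply/existsP; exists x; apply/existsP; exists x'; apply/and3P; split=> //; apply/eqP.
- by right; apply/existsP; exists y; apply/existsP; exists y'; apply/and3P; split=> //; apply/eqP.
Qed.

Lemma adj_inG x x' : gadj x x' -> adj (inl x) (inl x').
Proof. by move=> h; apply/adjP; left; exists x, x'. Qed.

Lemma adj_inH y y' : gadj y y' -> adj (inH y) (inH y').
Proof. by move=> h; apply/adjP; right; exists y, y'. Qed.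

Hypothesis huv : gadj u v.
Hypothesis hab : gadj a b.

Lemma neq_of_adj (K : graph) (x y : K) : gadj x y -> x != y.
Proof. by apply: contraTneq => ->; rewrite (@girr K). Qed.

Lemma gl_sym : symmetric adj.
Proof.
move=> p q; apply/idP/idP => /adjP [[x [x' [h <- <-]]]|[y [y' [h <- <-]]]];
  first [by apply: adj_inG; rewrite gsym | by apply: adj_inH; rewrite gsym].
Qed.

Lemma gl_irr : irreflexive adj.
Proof.
move=> p; apply/negP => /adjP [[x [x' [h <- [e]]]]|[y [y' [h <- e]]]].
  by move: h; rewrite e girr.
by move: h; rewrite (inH_inj (neq_of_adj huv) e) girr.
Qed.

Definition glG := Graph gl_sym gl_irr.

Lemma adj_inl_inl x x' : adj (inl x) (inl x') -> gadj x x'.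
Proof.
case/adjP => [[x1 [x1' [h [<-] [<-]]]] //|[y [y' [h e e']]]].
case/inH_inl: e => [[ya ->]|[yb ->]]; case/inH_inl: e' => [[ya' ->]|[yb' ->]] //.
- by move: h; rewrite ya ya' girr.
- by rewrite gsym.
- by move: h; rewrite yb yb' girr.
Qed.

Lemma adj_inr_inl s x : adj (inr s) (inl x) -> x = u \/ x = v.
Proof.
case/adjP => [[x1 [x1' [h //]]]|[y [y' [h e e']]]].
by case/inH_inl: e' => [[_ ->]|[_ ->]]; [left|right].
Qed.

End Generic.

Arguments inHP {G H} u v {a b} y.

Lemma Ffree_pull r (F : seq (cgraph r)) (V W : finType) (adjV : rel V) (adjW : rel W)
  (colW : W -> W -> 'I_r) (phi : V -> W) :
  Ffree F adjW colW -> (forall p q, adjV p q -> adjW (phi p) (phi q)) ->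
  Ffree F adjV (fun p q => colW (phi p) (phi q)).
Proof.
move=> fr hphi Fc inF h hh; apply: (fr Fc inF (fun x => phi (h x))) => x y xy.
by have [h1 h2] := hh x y xy; split=> //; apply: hphi.
Qed.

Section Nglue.
Variables (r : nat) (D G : graph) (xiD : D -> D -> option 'I_r) (xi : G -> G -> option 'I_r).
Variables (c1 c2 : D) (a b : G).
Hypotheses (hc : gadj c1 c2) (hab : gadj a b).
Hypotheses (pcD : is_pcoloring xiD) (pcG : is_pcoloring xi).

Local Notation N := (@gvert D G a b).
Local Notation inH := (@gl_inH D G c1 c2 a b).
Local Notation adj := (@gl_adj D G c1 c2 a b).

Definition xiN (p q : N) : option 'I_r :=
 match p, q with
 | inl x, inl x' => xiD x x'
 | inl x, inr s' => if x == c1 then xi a (val s') else if x == c2 then xi b (val s') else None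
 | inr s, inl x' => if x' == c1 then xi (val s) a else if x' == c2 then xi (val s) b else None
 | inr s, inr s' => xi (val s) (val s')
 end.

Definition isf (y y' : G) := ((y == a) && (y' == b)) || ((y == b) && (y' == a)).

Lemma c12 : c1 != c2. Proof. exact: neq_of_adj hc. Qed.
Lemma ab12 : a != b. Proof. exact: neq_of_adj hab. Qed.

Lemma xiN_inH y y' : gadj y y' -> ~~ isf y y' -> xiN (inH y) (inH y') = xi y y'.
Proof.
rewrite /isf; have nc := c12.
case: (inHP c1 c2 y) => [->|-> ya|s <- ya yb];
case: (inHP c1 c2 y') => [->|-> ya'|s' <- ya' yb'] //=; rewrite ?eqxx ?girr //=.
have nc' : (c2 == c1) = false by rewrite eq_sym (negbTE nc).
all: try by rewrite ?nc' ?orbT.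
all: move=> _ _; case: eqP => // e; by move: nc; rewrite e eqxx.
Qed.

Lemma xiN_f1 : xiN (inH a) (inH b) = xiD c1 c2.
Proof. by rewrite inH_a inH_b // ab12. Qed.
Lemma xiN_f2 : xiN (inH b) (inH a) = xiD c2 c1.
Proof. by rewrite inH_a inH_b // ab12. Qed.

Lemma isfP y y' : isf y y' -> (y = a /\ y' = b) \/ (y = b /\ y' = a).
Proof. by case/orP => /andP[/eqP -> /eqP ->]; [left|right]. Qed.

Lemma pcN : is_pcoloring (xiN : glG a b hc -> glG a b hc -> option 'I_r).
Proof.
move=> p q /adjP [[x [x' [h <- <-]]]|[y [y' [h <- <-]]]] /=; first exact: pcD.
case: (boolP (isf y y')) => [/isfP [[-> ->]|[-> ->]]|nf].
- by rewrite xiN_f1 xiN_f2 (pcD hc).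
- by rewrite xiN_f1 xiN_f2 (pcD hc).
have h' : gadj y' y by rewrite (@gsym G).
have nf' : ~~ isf y' y by apply: contra nf => /isfP [[-> ->]|[-> ->]]; rewrite /isf !eqxx ?orbT.
by rewrite xiN_inH // xiN_inH //; apply: pcG.
Qed.

Lemma classN p q : adj p q -> xiN p q != None ->
  (exists x x', [/\ p = inl x, q = inl x', gadj x x' & xiD x x' != None]) \/
  (exists y y', [/\ p = inH y, q = inH y', gadj y y', xi y y' = xiN p q & ~~ isf y y']).
Proof.
case/adjP => [[x [x' [h <- <-]]]|[y [y' [h <- <-]]]] nn.
  by left; exists x, x'.
case: (boolP (isf y y')) nn => [/isfP [[-> ->]|[-> ->]] nn|nf nn].
- left; exists c1, c2; split; [exact: inH_a | exact: inH_b ab12 | exact: hc | by rewrite -xiN_f1].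
- left; exists c2, c1; split; [exact: inH_b ab12 | exact: inH_a | by rewrite (@gsym D) | by rewrite -xiN_f2].
by right; exists y, y'; rewrite xiN_inH.
Qed.


Variables (F : seq (cgraph r)) (i j : 'I_r) (u v : G).
Hypotheses (detG : determiner F xi u v i) (safeG : Fsafe F xi u v) (xiab : xi a b = Some j).
Hypotheses (detD : determiner F xiD c1 c2 j) (safeD : Fsafe F xiD c1 c2).

Local Notation Ng := (glG a b hc).

Lemma restrD (g : Ng -> Ng -> 'I_r) : free_ext F (xiN : Ng -> Ng -> _) g ->
  free_ext F xiD (fun x x' => g (inl x) (inl x')).
Proof.
move=> [[col ag] fr]; split; first split.
- by move=> x x' h; apply: col; apply: adj_inG.
- by move=> x x' c h e; apply: ag => //; apply: adj_inG.
by apply: Ffree_pull fr _ => x x' h; apply: adj_inG.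
Qed.

Lemma restrD_j (g : Ng -> Ng -> 'I_r) : free_ext F (xiN : Ng -> Ng -> _) g ->
  g (inl c1) (inl c2) = j.
Proof. by move=> fe; case: detD => _ _ _ _ /(_ _ (restrD fe)). Qed.

Lemma restrG (g : Ng -> Ng -> 'I_r) : free_ext F (xiN : Ng -> Ng -> _) g ->
  free_ext F xi (fun y y' => g (inH y) (inH y')).
Proof.
move=> fe; have gj := restrD_j fe; move: fe => [[col ag] fr]; split; first split.
- by move=> x x' h; apply: col; apply: adj_inH.
- move=> y y' c h e; case: (boolP (isf y y')) => [/isfP [[ya yb]|[yb ya]]|nf].
  + move: e; rewrite ya yb inH_a inH_b ?ab12 // xiab => -[<-]; exact: gj.
  + move: e; rewrite ya yb inH_a inH_b ?ab12 // -(pcG hab) xiab => -[<-].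
    by rewrite (col (inl c2) (inl c1)) ?gj //; apply: adj_inG; rewrite (@gsym D).
  + by apply: ag; [apply: adj_inH | rewrite xiN_inH].
by apply: Ffree_pull fr _ => x x' h; apply: adj_inH.
Qed.


Lemma huv : gadj u v. Proof. by case: detG. Qed.

Lemma detN : determiner F (xiN : Ng -> Ng -> _) (inH u) (inH v) i.
Proof.
have [h1 h2 [w hw wfree] [g0 fe0] h5] := detG.
have wa : w != a by apply/eqP => wa; have := wfree b; rewrite wa xiab => /(_ hab).
have wb : w != b.
  apply/eqP => wb; have := wfree a; rewrite wb -(pcG hab) xiab (@gsym G) => /(_ hab) //.
split.
- exact: adj_inH.
- have nf : ~~ isf u v.
    apply/negP => /isfP [[eu ev]|[eu ev]]; move: h2; rewrite eu ev.
      by rewrite xiab.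
    by rewrite -(pcG hab) xiab.
  by rewrite xiN_inH.
- exists (inH w); first by case/orP: hw => /eqP ->; rewrite eqxx ?orbT.
  move=> q hq; apply/eqP; apply/negP => /negP nn.
  case: (classN hq nn) => [[x [x' [e _ _ _]]]|[y [y' [e e' h e2 _]]]].
    move: e; case: (inHP c1 c2 w) => [wa'|wb' _|s _ _ _] //.
      by move: wa; rewrite wa' eqxx.
    by move: wb; rewrite wb' eqxx.
  move/(inH_inj c12): e => e; subst y.
  by move: nn; rewrite -e2 wfree.
- have [_ sD] := safeD.
  have [gD feD] := (match detD with And5 _ _ _ x _ => x end).
  have gDj : gD c1 c2 = j by case: detD => _ _ _ _ /(_ _ feD).
  have g0j : g0 a b = j by case: fe0 => [[_ ag] _]; apply: ag.
  have [col0 _] := fe0.1.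
  have [g' [colg agD agG frg]] := sD G g0 col0 fe0.2 a b hab (ex_intro _ gD (conj feD (etrans gDj (esym g0j)))).
  exists g'; split; last exact: frg.
  split; first exact: colg.
  move=> p q c hpq e.
  have nn : xiN p q != None by rewrite e.
  case: (classN hpq nn) => [[x [x' [ep eq hx _]]]|[y [y' [ep eq hy e2 _]]]].
    by subst p q; apply: agD.
  subst p q; rewrite agG //.
  by case: fe0 => [[_ ag] _]; apply: ag; rewrite // e2.
- by move=> g fe; case: detG => _ _ _ _ /(_ _ (restrG fe)).
Qed.


Lemma safeN : Fsafe F (xiN : Ng -> Ng -> _) (inH u) (inH v).
Proof.
split; first by case: detN.
move=> H' gH colH frH a' b' hab' [g0 [fe0 e0]].
have feG := restrG fe0.
have [_ sG] := safeG.
have [g1 [col1 agx1 agH1 fr1]] := sG H' gH colH frH a' b' hab' (ex_intro _ _ (conj feG e0)).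
pose Mg := glG a' b' huv.
have habM : gadj (gl_inG a' b' a : Mg) (gl_inG a' b' b) by apply: adj_inG.
have g1ab : g1 (inl a) (inl b) = j by apply: agx1.
have [_ sD] := safeD.
have [gD feD] := (match detD with And5 _ _ _ x _ => x end).
have gDj : gD c1 c2 = j by case: detD => _ _ _ _ /(_ _ feD).
have [g2 [col2 agx2 agH2 fr2]] := sD Mg g1 col1 fr1 _ _ habM (ex_intro _ gD (conj feD (etrans gDj (esym g1ab)))).
pose inHP' := @gl_inH D Mg c1 c2 (gl_inG a' b' a) (gl_inG a' b' b).
pose phi (p : @gvert Ng H' a' b') : @gvert D Mg (gl_inG a' b' a) (gl_inG a' b' b) :=
  match p with
  | inl (inl x) => inl x
  | inl (inr s) => inHP' (inl (val s))
  | inr t => inHP' (@gl_inH G H' u v a' b' (val t))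
  end.
have C2 : forall y, phi (inl (inH y)) = inHP' (inl y).
  move=> y; case: (inHP c1 c2 y) => [->|->|s <- _ _] //=.
    by rewrite /inHP' inH_a.
  by rewrite /inHP' inH_b // (neq_of_adj habM).
have C3 : forall t, phi (@gl_inH Ng H' (inH u) (inH v) a' b' t) = inHP' (@gl_inH G H' u v a' b' t).
  move=> t; case: (@inHP Ng H' (inH u) (inH v) a' b' t) => [->|-> _|s <- _ _] //.
    by rewrite C2 inH_a.
  by rewrite C2 inH_b // (neq_of_adj hab').
have phiadj : forall p q, @gl_adj Ng H' (inH u) (inH v) a' b' p q -> @gl_adj D Mg c1 c2 _ _ (phi p) (phi q).
  move=> p q /adjP [[n [n' [h <- <-]]]|[y [y' [h <- <-]]]].
    case/adjP: h => [[x [x' [h <- <-]]]|[y [y' [h <- <-]]]].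
      by apply: adj_inG.
    by rewrite !C2; apply: adj_inH; apply: adj_inG.
  by rewrite !C3; apply: adj_inH; apply: adj_inH.
exists (fun p q => g2 (phi p) (phi q)); split.
- by move=> p q h; apply: col2; apply: phiadj.
- move=> p q c hpq e.
  have nn : xiN p q != None by rewrite e.
  case: (classN hpq nn) => [[x [x' [ep eq hx _]]]|[y [y' [ep eq hy e2 _]]]].
    by subst p q; apply: agx2.
  subst p q; cbv beta; rewrite !C2 agH2; last by apply: adj_inG.
  by apply: agx1; rewrite // e2.
- by move=> y y' h; cbv beta; rewrite !C3 agH2 ?agH1 //; apply: adj_inH.
- exact: Ffree_pull fr2 phiadj.
Qed.

End Nglue.

Definition badp r (K : graph) (xiK : K -> K -> option 'I_r) (w1 w2 : K) (k : nat)
  (pq : K * K) : bool :=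
  [&& gadj pq.1 pq.2, xiK pq.1 pq.2 != None &
      [exists n : 'I_k, walk n w1 pq.1 || walk n w2 pq.1]].

Lemma remote_of_nobad r (K : graph) (xiK : K -> K -> option 'I_r) (w1 w2 : K) k :
  (forall pq, ~~ badp xiK w1 w2 k pq) -> remote xiK w1 w2 k.
Proof.
move=> nb w z z' n hw hz hx hn; apply/negP => hwk.
move: (nb (z, z')); rewrite /badp /= hz hx /=; apply/negP; apply/negPn.
apply/existsP; exists (Ordinal hn) => /=.
by case/orP: hw => /eqP <-; rewrite hwk ?orbT.
Qed.

Section Walks.
Variables (r : nat) (D G : graph) (xiD : D -> D -> option 'I_r) (xi : G -> G -> option 'I_r).
Variables (c1 c2 : D) (a b : G).
Hypotheses (hc : gadj c1 c2) (hab : gadj a b).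

Local Notation Ng := (glG a b hc).
Local Notation inH := (@gl_inH D G c1 c2 a b).

Definition piG (p : Ng) : G := match p with inl x => if x == c2 then b else a | inr s => val s end.
Definition piD (p : Ng) : D := match p with inl x => x | inr _ => c1 end.

Lemma piG_inH y : piG (inH y) = y.
Proof.
case: (inHP c1 c2 y) => [->|->|s <- _ _] /=; rewrite ?eqxx //.
by rewrite (negbTE (c12 hc)).
Qed.

Lemma piG_adj p q : gadj p q -> piG p = piG q \/ gadj (piG p) (piG q).
Proof.
case/adjP => [[x [x' [h <- <-]]]|[y [y' [h <- <-]]]]; last by rewrite !piG_inH; right.
rewrite /=; case: (x == c2); case: (x' == c2); [left|right|right|left] => //.
by rewrite (@gsym G).
Qed.

Lemma piD_inH y : piD (inH y) = c1 \/ piD (inH y) = c2.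
Proof. by case: (inHP c1 c2 y) => [_|_ _|s _ _ _] /=; [left|right|left]. Qed.

Lemma piD_adj p q : gadj p q -> piD p = piD q \/ gadj (piD p) (piD q).
Proof.
case/adjP => [[x [x' [h <- <-]]]|[y [y' [h <- <-]]]]; first by right.
case: (piD_inH y) => ->; case: (piD_inH y') => ->; [left|right|right|left] => //.
by rewrite (@gsym D).
Qed.

Lemma walk_proj (K : graph) (pi : Ng -> K) :
  (forall p q, gadj p q -> pi p = pi q \/ gadj (pi p) (pi q)) ->
  forall n (p q : Ng), walk n p q -> exists2 m, m <= n & walk m (pi p) (pi q).
Proof.
move=> hpi; elim=> [|n IH] p q /=.
  by move=> /eqP ->; exists 0 => //=.
case/existsP => z /andP [hz hw]; have [m hm hw'] := IH _ _ hw.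
case: (hpi _ _ hz) => [->|ha]; first by exists m => //; apply: leqW.
exists m.+1 => //=; apply/existsP; exists (pi z); rewrite ha.
by [].
Qed.

Lemma walk_piG n p q : walk n p q -> exists2 m, m <= n & walk m (piG p) (piG q).
Proof. exact: walk_proj piG_adj n p q. Qed.

Lemma walk_inr n s x : walk (G:=Ng) n (inr s) (inl x) ->
  exists c, exists2 m, m < n & ((c == c1) || (c == c2)) && walk m c x.
Proof.
elim: n s => [|n IH] s //=.
case/existsP => z /andP [hz hw]; move: z hz hw => [x'|s'] hz hw.
  have [m hm hw'] := walk_proj piD_adj hw.
  exists x', m; first by rewrite ltnS.
  by rewrite hw' andbT; case: (adj_inr_inl hz) => ->; rewrite eqxx ?orbT.
have [c [m hm hw']] := IH _ hw.
by exists c, m => //; apply: leqW.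
Qed.

End Walks.

Section Bad.
Variables (r : nat) (D G : graph) (xiD : D -> D -> option 'I_r) (xi : G -> G -> option 'I_r).
Variables (c1 c2 : D) (a b : G).
Hypotheses (hc : gadj c1 c2) (hab : gadj a b).
Variables (u v : G) (k : nat).

Local Notation Ng := (glG a b hc).
Local Notation inH := (@gl_inH D G c1 c2 a b).
Local Notation xN := (@xiN r D G xiD xi c1 c2 a b : Ng -> Ng -> option 'I_r).

Hypothesis HD : forall x x' n, gadj x x' -> xiD x x' != None -> n < k ->
  ~~ walk (G:=Ng) n (inH u) (inl x) && ~~ walk (G:=Ng) n (inH v) (inl x).

Lemma badN_cases pq : badp xN (inH u) (inH v) k pq ->
  exists y, exists y', [/\ pq = (inH y, inH y'), ~~ isf a b y y' & badp xi u v k (y, y')].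
Proof.
case: pq => p q; rewrite /badp /= => /and3P [hpq nn /existsP [n hw]].
case: (classN hc hab hpq nn) => [[x [x' [ep eq hx nx]]]|[y [y' [ep eq hy e2 nf]]]].
  have := HD hx nx (ltn_ord n); move: hw; rewrite ep.
  by case/orP => ->; rewrite ?andbF.
exists y, y'; split; [by rewrite ep eq | exact: nf |].
rewrite /badp /= hy e2 nn /=.
move: hw; rewrite ep.
case/orP => hw; have [m hm] := walk_piG hab hw; rewrite !piG_inH => hw';
  apply/existsP; exists (Ordinal (leq_ltn_trans hm (ltn_ord n))); rewrite /= hw' ?orbT //.
Qed.

Lemma nobadN : (forall pq, ~~ badp xi u v k pq) -> forall pq, ~~ badp xN (inH u) (inH v) k pq.
Proof.
move=> nb pq; apply/negP => /badN_cases [y [y' [_ _ hb]]].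
by move: (nb (y, y')); rewrite hb.
Qed.

Lemma count_bad : badp xi u v k (a, b) || badp xi u v k (b, a) ->
  #|[set pq | badp xN (inH u) (inH v) k pq]| < #|[set pq | badp xi u v k pq]|.
Proof.
move=> Hab0.
have [e Hab hee] : exists2 e, badp xi u v k e & (e == (a, b)) || (e == (b, a)).
  by case/orP: Hab0 => h; [exists (a, b) | exists (b, a)]; rewrite ?eqxx ?orbT.
set BN := [set pq | _]; set BG := [set pq | _].
pose f (pq : Ng * Ng) := (piG pq.1, piG pq.2).
have inj : {in BN &, injective f}.
  move=> pq1 pq2; rewrite !inE => /badN_cases [y1 [y1' [-> _ _]]] /badN_cases [y2 [y2' [-> _ _]]].
  by rewrite /f /= !piG_inH => -[-> ->].
rewrite -(card_in_imset inj).
apply: (@leq_ltn_trans #|BG :\ e|).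
  apply: subset_leq_card; apply/subsetP => _ /imsetP [pq hpq ->].
  move: hpq; rewrite inE => /badN_cases [y [y' [-> nf hb]]].
  rewrite /f /= !piG_inH in_setD1 inE hb andbT.
  apply: contra nf => /eqP ye; move: hee; rewrite -ye !xpair_eqE.
  by rewrite /isf.
by rewrite [X in _ < X](cardsD1 e) inE Hab.
Qed.

End Bad.

Unset Implicit Arguments.
Section Loop.
Variable r : nat.
Variable P : forall G : graph, (G -> G -> option 'I_r) -> G -> G -> Prop.
Variable m : forall G : graph, (G -> G -> option 'I_r) -> G -> G -> nat.
Hypothesis step : forall G xi u v, P G xi u v -> 0 < m G xi u v ->
  exists G' xi' u' v', P G' xi' u' v' /\ m G' xi' u' v' < m G xi u v.

Lemma loop G xi u v : P G xi u v ->
  exists G' xi' u' v', P G' xi' u' v' /\ m G' xi' u' v' = 0.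
Proof.
suff: forall n G xi u v, m G xi u v <= n -> P G xi u v ->
  exists G' xi' u' v', P G' xi' u' v' /\ m G' xi' u' v' = 0 by apply; apply: leqnn.
elim=> [|n IH] G0 xi0 u0 v0 hm hP.
  by exists G0, xi0, u0, v0; split => //; apply/eqP; rewrite -leqn0.
case: (posnP (m G0 xi0 u0 v0)) => [h0|hpos]; first by exists G0, xi0, u0, v0.
have [G' [xi' [u' [v' [hP' hlt]]]]] := step G0 xi0 u0 v0 hP hpos.
by apply: (IH G' xi' u' v') => //; rewrite -ltnS; apply: leq_trans hlt hm.
Qed.
End Loop.
Set Implicit Arguments.

Definition mbad r k (G : graph) (xi : G -> G -> option 'I_r) (u v : G) :=
  #|[set pq | badp xi u v k pq]|.

Lemma mbad0 r k (G : graph) (xi : G -> G -> option 'I_r) (u v : G) :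
  mbad k xi u v = 0 -> forall pq, ~~ badp xi u v k pq.
Proof.
move/cards0_eq => e pq; apply/negP => hb.
by have := in_set0 pq; rewrite -e inE hb.
Qed.

Lemma mbadpos r k (G : graph) (xi : G -> G -> option 'I_r) (u v : G) :
  0 < mbad k xi u v -> exists pq, badp xi u v k pq.
Proof. by rewrite /mbad card_gt0 => /set0Pn [pq]; rewrite inE; exists pq. Qed.

Lemma free_endpoint r F (G : graph) (xi : G -> G -> option 'I_r) u v i :
  determiner F xi u v i ->
  exists2 w, (w == u) || (w == v) & forall z, gadj w z -> xi w z = None.
Proof. by case. Qed.

Definition PA r (F : seq (cgraph r)) i (G : graph) (xi : G -> G -> option 'I_r) (u v : G) :=
  [/\ is_pcoloring xi, determiner F xi u v i & Fsafe F xi u v].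

Lemma PA_glue r (F : seq (cgraph r)) i j (G D : graph) (xi : G -> G -> option 'I_r)
  (xiD : D -> D -> option 'I_r) (u v a b : G) (c1 c2 : D) (hc : gadj c1 c2) (hab : gadj a b) :
  PA F i xi u v -> xi a b = Some j -> PA F j xiD c1 c2 ->
  PA F i (@xiN r D G xiD xi c1 c2 a b : glG a b hc -> glG a b hc -> option 'I_r)
     (gl_inH c1 c2 a b u) (gl_inH c1 c2 a b v).
Proof.
move=> [pc det safe] e [pcD detD safeD]; split.
- exact: (pcN hab pcD pc).
- exact: (detN hc hab pc det e detD safeD).
- exact: (safeN hc hab pc det safe e detD safeD).
Qed.

Lemma walk0 (G : graph) (x y : G) : walk 0 x y = (x == y).
Proof. by []. Qed.

Section Main.
Variables (r : nat) (F : seq (cgraph r)).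
Hypothesis hyp : forall j : 'I_r, exists (D : graph) (xiD : D -> D -> option 'I_r) (c1 c2 : D),
  PA F j xiD c1 c2.

Lemma stepA i (G : graph) (xi : G -> G -> option 'I_r) (u v : G) :
  PA F i xi u v -> 0 < mbad 1 xi u v ->
  exists (G' : graph) (xi' : G' -> G' -> option 'I_r) (u' v' : G'),
    PA F i xi' u' v' /\ mbad 1 xi' u' v' < mbad 1 xi u v.
Proof.
move=> hP /mbadpos [[z z'] hb].
have hb' := hb; move: hb' => /and3P [/= hz nz /existsP [n hw]].
have n0 : val n = 0 by apply/eqP; rewrite -leqn0 -ltnS ltn_ord.
move: hw; rewrite n0 !walk0 => hw.
case e: (xi z z') nz => [j|] // _.
have [pc det safe] := hP.
have [w hw' wfree] := free_endpoint det.
have zw : z != w.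
  by apply/eqP => zw; move: e; rewrite zw wfree // -zw.
have z'w : z' != w.
  apply/eqP => zw'; have := wfree z; rewrite -zw' -(pc _ _ hz) e (@gsym G) => /(_ hz) //.
have zz' := neq_of_adj hz.
have uv : u != v by apply: neq_of_adj; case: det.
have z'uv : forall t, (t == u) || (t == v) -> z' != t.
  move=> t ht; apply/eqP => zt; subst t.
  case/orP: hw => /eqP hw; case/orP: hw' => /eqP hw'; case/orP: ht => /eqP ht; subst.
  all: try by move: zw; rewrite eqxx.
  all: try by move: z'w; rewrite eqxx.
  all: try by move: zz'; rewrite eqxx.
  all: try by move: uv; rewrite eqxx.
have [D [xiD [c1 [c2 hPD]]]] := hyp j.
have [pcD detD safeD] := hPD.
have hc : gadj c1 c2 by case: detD.
have [wD hwD wDfree] := free_endpoint detD.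
case/orP: hwD => /eqP hwD; subst wD.
- exists (glG z z' hc), (@xiN r D G xiD xi c1 c2 z z' : glG z z' hc -> glG z z' hc -> option 'I_r),
    (gl_inH c1 c2 z z' u), (gl_inH c1 c2 z z' v); split; first exact: (PA_glue hc hz hP e hPD).
  apply: (count_bad hz); last by rewrite hb.
  move=> x x' n' hx nx; rewrite ltnS leqn0 => /eqP -> /=.
  suff H : forall t, (t == u) || (t == v) -> gl_inH c1 c2 z z' t != inl x.
    by apply/andP; split; apply: H; rewrite eqxx ?orbT.
  move=> t ht; apply/eqP => /inH_inl [[_ ex]|[tz' _]].
    by move: nx; rewrite ex wDfree // -ex.
  by move: (z'uv t ht); rewrite tz' eqxx.
- have hz' : gadj z' z by rewrite (@gsym G).
  have e' : xi z' z = Some j by rewrite -(pc _ _ hz).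
  exists (glG z' z hc), (@xiN r D G xiD xi c1 c2 z' z : glG z' z hc -> glG z' z hc -> option 'I_r),
    (gl_inH c1 c2 z' z u), (gl_inH c1 c2 z' z v); split; first exact: (PA_glue hc hz' hP e' hPD).
  apply: (count_bad hz'); last by rewrite hb orbT.
  move=> x x' n' hx nx; rewrite ltnS leqn0 => /eqP -> /=.
  suff H : forall t, (t == u) || (t == v) -> gl_inH c1 c2 z' z t != inl x.
    by apply/andP; split; apply: H; rewrite eqxx ?orbT.
  move=> t ht; apply/eqP => /inH_inl [[tz' _]|[_ ex]].
    by move: (z'uv t ht); rewrite tz' eqxx.
  by move: nx; rewrite ex wDfree // -ex.
Qed.


Definition PB i (G : graph) (xi : G -> G -> option 'I_r) (u v : G) :=
  PA F i xi u v /\ forall pq, ~~ badp xi u v 1 pq.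

Lemma stepB d i :
  (forall j : 'I_r, exists (D : graph) (xiD : D -> D -> option 'I_r) (c1 c2 : D),
      [/\ is_pcoloring xiD, determiner F xiD c1 c2 j, remote xiD c1 c2 d & Fsafe F xiD c1 c2]) ->
  forall (G : graph) (xi : G -> G -> option 'I_r) (u v : G),
  PB i xi u v -> 0 < mbad d.+1 xi u v ->
  exists (G' : graph) (xi' : G' -> G' -> option 'I_r) (u' v' : G'),
    PB i xi' u' v' /\ mbad d.+1 xi' u' v' < mbad d.+1 xi u v.
Proof.
move=> IH G xi u v [hP nb1] /mbadpos [[a b] hb].
have hb' := hb; move: hb' => /and3P [/= hab nz _].
case e: (xi a b) nz => [j|] // _.
have [pc det safe] := hP.
have [D [xiD [c1 [c2 [pcD detD remD safeD]]]]] := IH j.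
have hPD : PA F j xiD c1 c2 by [].
have hc : gadj c1 c2 by case: detD.
have hba : gadj b a by rewrite (@gsym G).
have notab : forall t, (t == u) || (t == v) -> (t != a) && (t != b).
  move=> t ht; apply/andP; split; apply/eqP => ta.
    move: (nb1 (a, b)); rewrite /badp /= hab e /=; apply/negP; apply/negPn.
    apply/existsP; exists ord0 => /=; rewrite -ta.
    by case/orP: ht => /eqP ->; rewrite eqxx ?orbT.
  move: (nb1 (b, a)); rewrite /badp /= hba -(pc _ _ hab) e /=; apply/negP; apply/negPn.
  apply/existsP; exists ord0 => /=; rewrite -ta.
  by case/orP: ht => /eqP ->; rewrite eqxx ?orbT.
have HD : forall x x' n, gadj x x' -> xiD x x' != None -> n < d.+1 ->
    ~~ walk (G:=glG a b hc) n (gl_inH c1 c2 a b u) (inl x) &&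
    ~~ walk (G:=glG a b hc) n (gl_inH c1 c2 a b v) (inl x).
  move=> x x' n hx nx hn.
  suff H : forall t, (t == u) || (t == v) ->
      ~~ walk (G:=glG a b hc) n (gl_inH c1 c2 a b t) (inl x).
    by apply/andP; split; apply: H; rewrite eqxx ?orbT.
  move=> t ht; have /andP [ta tb] := notab t ht.
  case: (inHP c1 c2 t) => [ta'|tb' _|s _ _ _].
  - by move: ta; rewrite ta' eqxx.
  - by move: tb; rewrite tb' eqxx.
  apply/negP => /walk_inr [c [m hm /andP [hcc hw]]].
  have := remD c x x' m hcc hx nx (leq_trans hm hn).
  by rewrite hw.
have HD1 : forall x x' n, gadj x x' -> xiD x x' != None -> n < 1 ->
    ~~ walk (G:=glG a b hc) n (gl_inH c1 c2 a b u) (inl x) &&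
    ~~ walk (G:=glG a b hc) n (gl_inH c1 c2 a b v) (inl x).
  by move=> x x' n hx nx hn; apply: HD hx nx _; apply: leq_trans hn _.
exists (glG a b hc), (@xiN r D G xiD xi c1 c2 a b : glG a b hc -> glG a b hc -> option 'I_r),
  (gl_inH c1 c2 a b u), (gl_inH c1 c2 a b v); split; first split.
- exact: (PA_glue hc hab hP e hPD).
- exact: (nobadN hab HD1 nb1).
apply: (count_bad hab HD); by rewrite hb.
Qed.

Lemma main_thm : forall (d : nat) (i : 'I_r),
    exists (G : graph) (xi : G -> G -> option 'I_r) (u v : G),
      [/\ is_pcoloring xi, determiner F xi u v i, remote xi u v d
        & Fsafe F xi u v].
Proof.
have baseA : forall i, exists (G : graph) (xi : G -> G -> option 'I_r) (u v : G), PB i xi u v.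
  move=> i; have [G [xi [u [v hP]]]] := hyp i.
  have [G' [xi' [u' [v' [hP' hm]]]]] :=
    @loop r (fun G xi u v => PA F i xi u v) (fun G xi u v => mbad 1 xi u v)
      (fun G xi u v => @stepA i G xi u v) G xi u v hP.
  by exists G', xi', u', v'; split => //; apply: mbad0.
elim=> [|d IH] i.
  have [G [xi [u [v [pc det safe]]]]] := hyp i.
  by exists G, xi, u, v; split.
have [G [xi [u [v hP]]]] := baseA i.
have [G' [xi' [u' [v' [[[pc det safe] _] hm]]]]] :=
  @loop r (fun G xi u v => PB i xi u v) (fun G xi u v => mbad d.+1 xi u v)
    (fun G xi u v => @stepB d i IH G xi u v) G xi u v hP.
exists G', xi', u', v'; split => //.
by apply: remote_of_nobad; apply: mbad0.
Qed.

End Main.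


Unset Implicit Arguments.

Theorem lemma6 (r : nat) (F : seq (cgraph r)) :
  (forall i : 'I_r, exists (G : graph) (xi : G -> G -> option 'I_r) (u v : G),
      [/\ is_pcoloring xi, determiner F xi u v i & Fsafe F xi u v]) ->
  forall (d : nat) (i : 'I_r),
    exists (G : graph) (xi : G -> G -> option 'I_r) (u v : G),
      [/\ is_pcoloring xi, determiner F xi u v i, remote xi u v d
        & Fsafe F xi u v].
Proof.
move=> hyp; exact: (main_thm hyp).
Qed.
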